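(* Consider a finite stochastic partial monitoring game with $N$ actions, $M$ outcomes and $A$ symbols, given by a loss matrix $L=(l_{i,j})\in\mathbb{R}^{N\times M}$, a feedback matrix $H=(h_{i,j})\in[A]^{N\times M}$ and an opponent strategy $p^*\in\mathcal{P}_M$, assumed globally observable and such that action $1$ is the unique optimal action under $p^*$. Let $p^*_i=S_ip^*$ for $i\in[N]$. Then any strongly consistent algorithm satisfies, for all sufficiently large $T$, $$\forall q\in\mathcal{C}_1^c:\quad \sum_{i\in[N]}\mathbb{E}[N_i(T)]\,D(p^*_i\,\Vert\,S_iq)\ \ge\ \log T-\mathrm{o}(\log T).$$
   Context: Game: at each round $t=1,\dots,T$ the learner chooses an action $i(t)\in[N]$ and the opponent's outcome $j(t)\in[M]$ is drawn i.i.d. from $p^*\in\mathcal{P}_M$ (the set of probability distributions on $[M]$); the learner knows $L,H$, suffers the unobserved loss $l_{i(t),j(t)}$ and observes only the symbol $h_{i(t),j(t)}\in[A]$, where $[A]=\{1,\dots,A\}$. $L_i$ denotes the $i$-th row of $L$. Action $1$ is optimal: $1=\arg\min_i L_i^\top p^*$ uniquely. $\Delta_i=(L_i-L_1)^\top p^*$; $N_i(t)$ is the number of rounds before round $t$ in which action $i$ was selected; the regret is $\mathrm{Regret}(T)=\sum_{t=1}^T\Delta_{i(t)}$. Signal matrix: $S_i\in\{0,1\}^{A\times M}$ with $(S_i)_{k,j}=1$ iff $h_{i,j}=k$, so $S_iq$ is the distribution of observed symbols when playing $i$ under outcome distribution $q$. Optimality cell: $\mathcal{C}_i=\{q\in\mathcal{P}_M:\forall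 j\neq i,\ (L_i-L_j)^\top q\le 0\}$, and $\mathcal{C}_i^c=\mathcal{P}_M\setminus\mathcal{C}_i$. $D(p\Vert q)=\sum_k p_k\log(p_k/q_k)$ is the KL divergence of discrete distributions with $0\log(0/0)=0$. Global observability: for all pairs $i,j$, $L_i-L_j\in\bigoplus_{k\in[N]}\mathrm{Im}\,S_k^\top$. An algorithm is strongly consistent if $\mathbb{E}[\mathrm{Regret}(T)]=\mathrm{o}(T^a)$ for every $a>0$ and every opponent strategy $p\in\mathcal{P}_M$ (with $L,H$ fixed). *)

(* Defs.v *)
From mathcomp Require Import all_boot all_order all_algebra.
From mathcomp Require Import boolp classical_sets reals ereal exp.
Set Implicit Arguments. Unset Strict Implicit. Unset Printing Implicit Defensive.
Import Order.TTheory GRing.Theory Num.Theory.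
Local Open Scope ring_scope.

Definition is_dist (R : realType) (n : nat) (p : 'I_n -> R) : Prop :=
  (forall j, 0 <= p j) /\ \sum_j p j = 1.

Definition loss (R : realType) (N M : nat) (L : 'M[R]_(N, M)) (i : 'I_N)
  (q : 'I_M -> R) : R := \sum_j L i j * q j.

Definition gap (R : realType) (N M : nat) (L : 'M[R]_(N, M)) (p : 'I_M -> R)
  (i : 'I_N) : R := \big[Num.max/0]_k (loss L i p - loss L k p).

Definition sigmat (R : realType) (N M A : nat) (H : 'I_N -> 'I_M -> 'I_A)
  (i : 'I_N) : 'M[R]_(A, M) := \matrix_(k, j) (H i j == k)%:R.

Definition obs_dist (R : realType) (N M A : nat) (H : 'I_N -> 'I_M -> 'I_A)
  (i : 'I_N) (q : 'I_M -> R) : 'I_A -> R :=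
  fun k => \sum_j sigmat R H i k j * q j.

Definition in_cell (R : realType) (N M : nat) (L : 'M[R]_(N, M)) (i : 'I_N)
  (q : 'I_M -> R) : Prop :=
  is_dist q /\ forall j, j != i -> loss L i q - loss L j q <= 0.

Definition in_cell_compl (R : realType) (N M : nat) (L : 'M[R]_(N, M))
  (i : 'I_N) (q : 'I_M -> R) : Prop := is_dist q /\ ~ in_cell L i q.

Definition globally_observable (R : realType) (N M A : nat)
  (L : 'M[R]_(N, M)) (H : 'I_N -> 'I_M -> 'I_A) : Prop :=
  forall i j : 'I_N, exists v : 'I_N -> 'cV[R]_A,
    (row i L - row j L)^T = \sum_k (sigmat R H k)^T *m v k.

(* KL divergence in extended reals, with 0 log(0/q) = 0 and p log(p/0) = +oo *)
Definition KL (R : realType) (n : nat) (p q : 'I_n -> R) : \bar R :=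
  if [exists k, (0 < p k) && (q k == 0)] then +oo%E
  else (\sum_(k | 0 < p k) p k * ln (p k / q k))%:E.

(* A (possibly randomized, anytime) algorithm: a behavior strategy mapping the
   observed history (past actions and observed symbols) to a distribution
   over actions. *)
Definition policy (R : realType) (N A : nat) :=
  seq ('I_N * 'I_A) -> 'I_N -> R.

Definition valid_policy (R : realType) (N A : nat) (pol : policy R N A) : Prop :=
  forall h, is_dist (pol h).

Definition hist_of (N M A : nat) (H : 'I_N -> 'I_M -> 'I_A)
  (s : seq ('I_N * 'I_M)) : seq ('I_N * 'I_A) :=
  [seq (x.1, H x.1 x.2) | x <- s].

Definition traj_prob (R : realType) (N M A : nat) (H : 'I_N -> 'I_M -> 'I_A)
  (pol : policy R N A) (p : 'I_M -> R) (n : nat)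
  (tr : n.-tuple ('I_N * 'I_M)) : R :=
  \prod_(t < n) (pol (hist_of H (take t tr)) (tnth tr t).1 * p (tnth tr t).2).

Definition ENcount (R : realType) (N M A : nat) (H : 'I_N -> 'I_M -> 'I_A)
  (pol : policy R N A) (p : 'I_M -> R) (n : nat) (i : 'I_N) : R :=
  \sum_(tr : n.-tuple ('I_N * 'I_M))
     traj_prob H pol p tr * (count (fun x => x.1 == i) tr)%:R.

Definition Eregret (R : realType) (N M A : nat) (L : 'M[R]_(N, M))
  (H : 'I_N -> 'I_M -> 'I_A) (pol : policy R N A) (p : 'I_M -> R) (T : nat) : R :=
  \sum_i ENcount H pol p T i * gap L p i.

Definition strongly_consistent (R : realType) (N M A : nat) (L : 'M[R]_(N, M))
  (H : 'I_N -> 'I_M -> 'I_A) (pol : policy R N A) : Prop :=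
  forall p : 'I_M -> R, is_dist p ->
  forall a : R, 0 < a -> forall eps : R, 0 < eps ->
  exists T0 : nat, forall T : nat, (T0 <= T)%N ->
    Eregret L H pol p T <= eps * (T%:R `^ a).

(* Main.v *)
Require Import Defs.
From mathcomp Require Import all_boot all_order all_algebra.
From mathcomp Require Import boolp classical_sets reals ereal exp.
From mathcomp Require Import sequences.
From mathcomp Require Import ring lra.
Import Order.TTheory GRing.Theory Num.Theory.
Local Open Scope ring_scope.


Lemma jensen (R : realType) (I : finType) (w l : I -> R) :
  (forall k, 0 <= w k) -> 0 < \sum_k w k ->
  (\sum_k w k) * expR ((\sum_k w k * l k) / \sum_k w k) <= \sum_k w k * expR (l k).
Proof.
move=> w0 W0; set W := \sum_k w k; set m := (\sum_k w k * l k) / W.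
have e : forall k, w k * expR (l k) = expR m * (w k * expR (l k - m)).
  by move=> k; rewrite mulrCA -expRD addrC subrK.
under [X in _ <= X]eq_bigr do rewrite e.
rewrite -mulr_sumr mulrC; apply: ler_wpM2l; first exact/ltW/expR_gt0.
apply: (@le_trans _ _ (\sum_k w k * (1 + (l k - m)))).
  rewrite (eq_bigr (fun k => w k + (w k * l k - w k * m))); last first.
    by move=> k _; rewrite mulrDr mulr1 mulrBr.
  rewrite big_split /= sumrB -mulr_suml.
  by rewrite -/W /m mulrC divfK ?subrr ?addr0 // gt_eqF.
by apply: ler_sum => k _; apply: ler_wpM2l => //; exact: expR_ge1Dx.
Qed.

Section Aux.
Variable R : realType.
Variables (N M A : nat) (H : 'I_N -> 'I_M -> 'I_A) (pol : policy R N A).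

Lemma sum_tupleS (T : finType) n (F : n.+1.-tuple T -> R) :
  \sum_(t : n.+1.-tuple T) F t = \sum_(t : n.-tuple T) \sum_(x : T) F (rcons_tuple t x).
Proof.
rewrite pair_bigA /=.
have hb : bijective (fun p : n.-tuple T * T => rcons_tuple p.1 p.2).
  apply: inj_card_bij.
    move=> [a x] [b y] /= /(congr1 val) /= /rcons_inj [] /val_inj -> ->.
    by [].
  by rewrite card_prod !card_tuple expnS mulnC.
by rewrite (reindex _ (onW_bij _ hb)).
Qed.

Lemma traj_prob_rcons (p : 'I_M -> R) n (tr : n.-tuple ('I_N * 'I_M)) x :
  traj_prob H pol p (rcons_tuple tr x) =
  traj_prob H pol p tr * (pol (hist_of H tr) x.1 * p x.2).
Proof.
rewrite /traj_prob big_ord_recr /=; congr (_ * _).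
  apply: eq_bigr => t _.
  have ht : (t <= size tr)%N by rewrite size_tuple ltnW.
  rewrite !(tnth_nth x) /= -cats1 takel_cat // nth_cat size_tuple ltn_ord.
  by [].
rewrite !(tnth_nth x) /= -cats1 takel_cat ?size_tuple // -{1}(size_tuple tr) take_size.
by rewrite nth_cat size_tuple ltnn subnn.
Qed.

Local Notation X := ('I_N * 'I_M)%type.
Local Notation tp := (traj_prob H pol).
Definition wstep (p : 'I_M -> R) (h : seq ('I_N * 'I_A)) (x : X) : R :=
  pol h x.1 * p x.2.

Lemma sum_step (p : 'I_M -> R) n (F : n.+1.-tuple X -> R) :
  \sum_tr tp p tr * F tr =
  \sum_(tr : n.-tuple X) tp p tr * \sum_x wstep p (hist_of H tr) x * F (rcons_tuple tr x).
Proof.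
rewrite sum_tupleS; apply: eq_bigr => tr _; rewrite mulr_sumr.
by apply: eq_bigr => x _; rewrite traj_prob_rcons /wstep !mulrA.
Qed.

Lemma sum_wstep p h : valid_policy pol -> is_dist p -> \sum_x wstep p h x = 1.
Proof.
move=> vp [_ p1]; rewrite /wstep -(pair_bigA _ (fun a j => pol h a * p j)) /=.
rewrite -[RHS](proj2 (vp h)); apply: eq_bigr => a _.
by rewrite -mulr_sumr p1 mulr1.
Qed.

Lemma wstep_ge0 p h x : valid_policy pol -> is_dist p -> 0 <= wstep p h x.
Proof. by move=> vp [p0 _]; rewrite mulr_ge0 // (proj1 (vp h)). Qed.

Lemma tp_ge0 p n (tr : n.-tuple X) : valid_policy pol -> is_dist p -> 0 <= tp p tr.
Proof.
move=> vp [p0 _]; apply: prodr_ge0 => t _.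
by rewrite mulr_ge0 // (proj1 (vp _)).
Qed.

Lemma sum_tp p n : valid_policy pol -> is_dist p -> \sum_(tr : n.-tuple X) tp p tr = 1.
Proof.
move=> vp dp; elim: n => [|n IH].
  rewrite (eq_bigr (fun _ => 1)); last by move=> tr _; rewrite /traj_prob big_ord0.
  by rewrite sumr_const card_tuple expn0.
rewrite (eq_bigr (fun tr => tp p tr * 1)); last by move=> tr _; rewrite mulr1.
rewrite sum_step -[RHS]IH; apply: eq_bigr => tr _.
rewrite (eq_bigr (fun x => wstep p (hist_of H tr) x)); last by move=> x _; rewrite mulr1.
by rewrite sum_wstep // mulr1.
Qed.

Lemma count_step p n (c : pred X) : valid_policy pol -> is_dist p ->
  \sum_(tr : n.+1.-tuple X) tp p tr * (count c tr)%:R =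
  \sum_(tr : n.-tuple X) tp p tr * (count c tr)%:R +
  \sum_(tr : n.-tuple X) tp p tr * \sum_x wstep p (hist_of H tr) x * (c x)%:R.
Proof.
move=> vp dp; rewrite sum_step -big_split /=; apply: eq_bigr => tr _.
rewrite -mulrDr; congr (_ * _).
rewrite (eq_bigr (fun x => wstep p (hist_of H tr) x * ((count c tr)%:R + (c x)%:R))); last first.
  by move=> x _; rewrite /= -cats1 count_cat /= addn0 natrD.
under eq_bigr do rewrite mulrDr.
by rewrite big_split /= -mulr_suml sum_wstep // mul1r.
Qed.

Lemma count_pair p n (x0 : X) : valid_policy pol -> is_dist p ->
  \sum_(tr : n.-tuple X) tp p tr * (count (pred1 x0) tr)%:R =
  ENcount H pol p n x0.1 * p x0.2.
Proof.
move=> vp dp; rewrite /ENcount; elim: n => [|n IH].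
  rewrite big1; last by move=> tr _; rewrite (size0nil (size_tuple tr)) mulr0.
  rewrite big1 ?mul0r //.
  by move=> tr _; rewrite (size0nil (size_tuple tr)) mulr0.
rewrite count_step // IH (count_step _ _ (fun x : X => x.1 == x0.1)) // mulrDl.
congr (_ + _); rewrite mulr_suml; apply: eq_bigr => tr _.
rewrite -mulrA; congr (_ * _).
rewrite (bigD1 x0) //= eqxx mulr1 big1 ?addr0; last first.
  by move=> y /negbTE ->; rewrite mulr0.
have -> : \sum_x wstep p (hist_of H tr) x * (x.1 == x0.1)%:R = pol (hist_of H tr) x0.1.
  rewrite /wstep -(pair_bigA _ (fun a j => pol (hist_of H tr) a * p j * ((a == x0.1)%:R))) /=.
  rewrite (bigD1 x0.1) //= [X in _ + X]big1 => [|a /negbTE ha]; last first.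
    by apply: big1 => j _; rewrite ha mulr0.
  rewrite addr0 eqxx; under eq_bigr do rewrite mulr1.
  by rewrite -mulr_sumr (proj2 dp) mulr1.
by rewrite /wstep.
Qed.

Lemma group_sym (a : 'I_N) (w : 'I_M -> R) (G : 'I_A -> R) :
  \sum_j w j * G (H a j) = \sum_s obs_dist H a w s * G s.
Proof.
rewrite /obs_dist; under [RHS]eq_bigr do rewrite mulr_suml.
rewrite exchange_big /=; apply: eq_bigr => j _.
rewrite (bigD1 (H a j)) //= big1 ?addr0.
  by rewrite /sigmat mxE eqxx mul1r.
by move=> s hs; rewrite /sigmat mxE eq_sym (negbTE hs) mul0r mul0r.
Qed.

Lemma obs_dist_ge0 a (w : 'I_M -> R) s : (forall j, 0 <= w j) -> 0 <= obs_dist H a w s.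
Proof.
move=> w0; apply: sumr_ge0 => j _; rewrite mulr_ge0 // /sigmat mxE.
by case: (_ == _).
Qed.

Definition rho (p q : 'I_M -> R) (a : 'I_N) (s : 'I_A) : R :=
  obs_dist H a q s / obs_dist H a p s.
Definition rr (p q : 'I_M -> R) (x : X) : R := rho p q x.1 (H x.1 x.2).

Lemma rho_ge0 p q a s : is_dist p -> is_dist q -> 0 <= rho p q a s.
Proof.
move=> [p0 _] [q0 _]; rewrite /rho divr_ge0 //; exact: obs_dist_ge0.
Qed.

Lemma key_pt p q a (G : 'I_A -> R) : is_dist p -> is_dist q -> (forall s, 0 <= G s) ->
  \sum_j p j * (rho p q a (H a j) * G (H a j)) <= \sum_j q j * G (H a j).
Proof.
move=> dp dq G0.
rewrite (group_sym a p (fun s => rho p q a s * G s)) (group_sym a q G).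
apply: ler_sum => s _; rewrite /rho.
have [e0|ne0] := eqVneq (obs_dist H a p s) 0.
  rewrite e0 mul0r mulr_ge0 //; apply: obs_dist_ge0; exact: (proj1 dq).
by rewrite mulrA mulrCA mulfV // mulr1.
Qed.

Lemma change_meas p q n (f : seq ('I_N * 'I_A) -> R) :
  valid_policy pol -> is_dist p -> is_dist q -> (forall h, 0 <= f h) ->
  \sum_(tr : n.-tuple X) tp p tr * ((\prod_(x <- tr) rr p q x) * f (hist_of H tr)) <=
  \sum_(tr : n.-tuple X) tp q tr * f (hist_of H tr).
Proof.
move=> vp dp dq; elim: n f => [|n IH] f f0.
  apply: ler_sum => tr _.
  rewrite (size0nil (size_tuple tr)) big_nil mul1r /traj_prob !big_ord0.
  by [].
rewrite sum_step (sum_step q).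
pose g' h := \sum_x wstep p h x * (rr p q x * f (rcons h (x.1, H x.1 x.2))).
pose g h := \sum_x wstep q h x * f (rcons h (x.1, H x.1 x.2)).
have g'0 : forall h, 0 <= g' h.
  move=> h; apply: sumr_ge0 => x _; rewrite mulr_ge0 ?wstep_ge0 //.
  by rewrite mulr_ge0 // rho_ge0.
apply: (@le_trans _ _ (\sum_(tr : n.-tuple X) tp q tr * g' (hist_of H tr))).
  apply: le_trans (IH g' g'0); rewrite le_eqVlt; apply/orP; left; apply/eqP.
  apply: eq_bigr => tr _; congr (_ * _).
  rewrite /g' mulr_sumr; apply: eq_bigr => x _.
  rewrite /= -cats1 big_cat /= big_seq1 /hist_of map_cat /=.
  by rewrite cats1 /wstep; ring.
apply: ler_sum => tr _; apply: ler_wpM2l; first exact: tp_ge0.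
rewrite /= -/(hist_of H tr).
have -> : \sum_x wstep q (hist_of H tr) x * f (hist_of H (rcons tr x)) = g (hist_of H tr).
  by apply: eq_bigr => x _; rewrite /hist_of map_rcons.
set h := hist_of H tr.
rewrite /g /g' /wstep.
rewrite -(pair_bigA _ (fun a j => pol h a * p j * (rr p q (a, j) * f (rcons h (a, H a j))))).
rewrite -(pair_bigA _ (fun a j => pol h a * q j * f (rcons h (a, H a j)))) /=.
apply: ler_sum => a _.
under eq_bigr do rewrite -mulrA.
under [X in _ <= X]eq_bigr do rewrite -mulrA.
rewrite -!mulr_sumr; apply: ler_wpM2l; first exact: (proj1 (vp h)).
have := key_pt p q a (fun s => f (rcons h (a, s))) dp dq (fun s => f0 _).
by rewrite /rr /=.
Qed.

Lemma sum_seq_count (s : seq X) (phi : X -> R) :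
  \sum_(x <- s) phi x = \sum_x (count_mem x s)%:R * phi x.
Proof.
elim: s => [|y s IH]; first by rewrite big_nil big1 // => x _; rewrite mul0r.
rewrite big_cons IH.
under [RHS]eq_bigr do rewrite /= natrD mulrDl.
rewrite big_split /=; congr (_ + _).
rewrite (bigD1 y) //= eqxx mul1r big1 ?addr0 //.
by move=> x hx; rewrite eq_sym (negbTE hx) mul0r.
Qed.

Lemma E_seq p n (phi : X -> R) : valid_policy pol -> is_dist p ->
  \sum_(tr : n.-tuple X) tp p tr * \sum_(x <- tr) phi x =
  \sum_a ENcount H pol p n a * \sum_j p j * phi (a, j).
Proof.
move=> vp dp.
under eq_bigr do rewrite sum_seq_count mulr_sumr.
rewrite exchange_big /=.
under [RHS]eq_bigr do rewrite mulr_sumr.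
rewrite [RHS]pair_bigA /=; apply: eq_bigr => x _.
rewrite mulrA mulrC -count_pair // mulr_sumr; apply: eq_bigr => tr _.
by rewrite -surjective_pairing mulrA mulrC.
Qed.


Definition KLfin (p q : 'I_M -> R) (a : 'I_N) : bool :=
  ~~ [exists k, (0 < obs_dist H a p k) && (obs_dist H a q k == 0)].

Lemma EN_ge0 p n i : valid_policy pol -> is_dist p -> 0 <= ENcount H pol p n i.
Proof. by move=> vp dp; apply: sumr_ge0 => tr _; rewrite mulr_ge0 ?tp_ge0. Qed.

Lemma tp_pos_fact p n (tr : n.-tuple X) (t : 'I_n) : valid_policy pol -> is_dist p ->
  0 < tp p tr -> 0 < pol (hist_of H (take t tr)) (tnth tr t).1 /\ 0 < p (tnth tr t).2.
Proof.
move=> vp [p0 p1] hpos.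
have hge : 0 <= pol (hist_of H (take t tr)) (tnth tr t).1 by exact: (proj1 (vp _)).
have [e|ne] := eqVneq (pol (hist_of H (take t tr)) (tnth tr t).1 * p (tnth tr t).2) 0.
  move: hpos; rewrite /traj_prob (bigD1 t) //= e mul0r ltxx.
  by [].
move: ne; rewrite mulf_eq0 negb_or => /andP [n1 n2].
by split; rewrite lt_def ?n1 ?n2 ?hge ?p0.
Qed.

Lemma tp_pos_mem p n (tr : n.-tuple X) x : valid_policy pol -> is_dist p ->
  0 < tp p tr -> x \in (tr : seq X) -> 0 < p x.2 /\ 0 < ENcount H pol p n x.1.
Proof.
move=> vp dp hpos /tnthP [t ->]; split; first exact: (proj2 (tp_pos_fact _ _ _ t vp dp hpos)).
rewrite /ENcount (bigD1 tr) //=.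
apply: (@lt_le_trans _ _ (tp p tr * (count (fun y : X => y.1 == (tnth tr t).1) tr)%:R)).
  rewrite mulr_gt0 // ltr0n -has_count; apply/hasP; exists (tnth tr t) => //.
  exact: mem_tnth.
rewrite lerDl; apply: sumr_ge0 => tr' _; rewrite mulr_ge0 ?tp_ge0 //.
Qed.

Lemma obs_dist_ge_pt a (w : 'I_M -> R) j : (forall j, 0 <= w j) -> w j <= obs_dist H a w (H a j).
Proof.
move=> w0; rewrite /obs_dist (bigD1 j) //= /sigmat mxE eqxx mul1r lerDl.
by apply: sumr_ge0 => k _; rewrite mulr_ge0 // mxE; case: (_ == _).
Qed.

Lemma rr_pos p q a j : is_dist p -> is_dist q -> KLfin p q a -> 0 < p j -> 0 < rr p q (a, j).
Proof.
move=> dp dq hf pj; rewrite /rr /rho /=.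
have hp : 0 < obs_dist H a p (H a j) := lt_le_trans pj (obs_dist_ge_pt a p j (proj1 dp)).
have hq : 0 < obs_dist H a q (H a j).
  rewrite lt_def obs_dist_ge0 ?andbT; last exact: (proj1 dq).
  apply/negP => /eqP e; move: hf; rewrite /KLfin negb_exists => /forallP /(_ (H a j)).
  by rewrite hp e eqxx.
by rewrite divr_gt0.
Qed.

Definition cKL (p q : 'I_M -> R) (a : 'I_N) : R :=
  \sum_(k | 0 < obs_dist H a p k) obs_dist H a p k * ln (obs_dist H a p k / obs_dist H a q k).

Lemma Elam p q n : valid_policy pol -> is_dist p -> is_dist q ->
  (forall a, 0 < ENcount H pol p n a -> KLfin p q a) ->
  \sum_(tr : n.-tuple X) tp p tr * \sum_(x <- tr) ln (rr p q x) =
  - \sum_a ENcount H pol p n a * cKL p q a.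
Proof.
move=> vp dp dq hf; rewrite E_seq // -sumrN; apply: eq_bigr => a _.
have [e|ne] := eqVneq (ENcount H pol p n a) 0; first by rewrite e !mul0r oppr0.
have hpos : 0 < ENcount H pol p n a by rewrite lt_def ne EN_ge0.
rewrite -mulrN; congr (_ * _).
rewrite /rr /= (group_sym a p (fun s => ln (rho p q a s))) /cKL -sumrN.
rewrite [LHS](bigID (fun k => 0 < obs_dist H a p k)) /= [X in _ + X]big1 ?addr0.
  apply: eq_bigr => s hs; rewrite /rho.
  have hq : 0 < obs_dist H a q s.
    rewrite lt_def obs_dist_ge0 ?andbT; last exact: (proj1 dq).
    apply/negP => /eqP e; move: (hf a hpos); rewrite /KLfin negb_exists => /forallP /(_ s).
    by rewrite hs e eqxx.
  by rewrite -invf_div lnV ?mulrN // posrE divr_gt0.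
move=> s hs; have -> : obs_dist H a p s = 0.
  apply/eqP; rewrite eq_le obs_dist_ge0 ?andbT; [by rewrite leNgt | exact: (proj1 dp)].
by rewrite mul0r.
Qed.

Lemma core p q n (Ab : seq 'I_N -> bool) : valid_policy pol -> is_dist p -> is_dist q ->
  (forall a, 0 < ENcount H pol p n a -> KLfin p q a) ->
  0 < \sum_(tr : n.-tuple X) tp p tr * (Ab [seq x.1 | x <- tr])%:R ->
  (\sum_(tr : n.-tuple X) tp p tr * (Ab [seq x.1 | x <- tr])%:R) *
    expR ((- (\sum_a ENcount H pol p n a * cKL p q a) - 1) /
          (\sum_(tr : n.-tuple X) tp p tr * (Ab [seq x.1 | x <- tr])%:R)) <=
  \sum_(tr : n.-tuple X) tp q tr * (Ab [seq x.1 | x <- tr])%:R.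
Proof.
move=> vp dp dq hf.
set PA := \sum_(tr : n.-tuple X) _; set D := \sum_a _ => PA0.
pose y (tr : seq X) := \prod_(x <- tr) rr p q x.
pose lam (tr : seq X) := \sum_(x <- tr) ln (rr p q x).
pose ind (tr : seq X) : R := (Ab [seq x.1 | x <- tr])%:R.
have ye : forall tr : n.-tuple X, 0 < tp p tr -> y tr = expR (lam tr).
  move=> tr hpos; rewrite /y /lam expR_sum; apply: eq_big_seq => x hx.
  rewrite lnK // posrE.
  have [h1 h2] := tp_pos_mem _ _ _ _ vp dp hpos hx; move: hx h1 h2; case: x => a j /= _ h1 h2.
  by apply: rr_pos => //; exact: hf.
have tpcase : forall tr : n.-tuple X, tp p tr = 0 \/ 0 < tp p tr.
  move=> tr; have := tp_ge0 p n tr vp dp; rewrite le_eqVlt => /orP [/eqP <-|->].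
    by left.
  by right.
have hQA : \sum_(tr : n.-tuple X) tp p tr * (y tr * ind tr) <=
           \sum_(tr : n.-tuple X) tp q tr * (Ab [seq x.1 | x <- tr])%:R.
  have hcm := change_meas p q n (fun h => (Ab [seq o.1 | o <- h])%:R) vp dp dq.
  have eh : forall tr : seq X, [seq o.1 | o <- hist_of H tr] = [seq x.1 | x <- tr].
    by move=> tr; rewrite /hist_of -map_comp.
  have e1 := eq_bigr (fun tr : n.-tuple X => tp q tr * (Ab [seq x.1 | x <- tr])%:R)
    (fun tr _ => congr1 (fun z => tp q tr * (Ab z)%:R) (eh tr)).
  have e2 := eq_bigr (fun tr : n.-tuple X => tp p tr * (y tr * ind tr))
    (fun tr _ => congr1 (fun z => tp p tr * (y tr * (Ab z)%:R)) (eh tr)).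
  rewrite -e1 -e2; apply: hcm.
  by move=> h; case: (Ab _).
have hall : \sum_(tr : n.-tuple X) tp p tr * y tr <= 1.
  have hcm := change_meas p q n (fun _ => (1:R)) vp dp dq (fun _ => ler01).
  have e1 : \sum_(tr : n.-tuple X) tp p tr * y tr =
    \sum_(tr : n.-tuple X) tp p tr * (y tr * (fun _ => (1:R)) (hist_of H tr)).
    by apply: eq_bigr => tr _; rewrite /= mulr1.
  have e2 : \sum_(tr : n.-tuple X) tp q tr * (fun _ => (1:R)) (hist_of H tr) = 1.
    by rewrite -[RHS](sum_tp q n vp dq); apply: eq_bigr => tr _; rewrite /= mulr1.
  by rewrite e1; apply: le_trans hcm _; rewrite e2.
have hEl := Elam p q n vp dp dq hf; rewrite -/D in hEl.
have hJ := @jensen R _ (fun tr : n.-tuple X => tp p tr * ind tr) lam.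
have w0 : forall tr : n.-tuple X, 0 <= tp p tr * ind tr.
  by move=> tr; rewrite mulr_ge0 ?tp_ge0 // /ind; case: (Ab _).
have {}hJ := hJ w0 PA0.
have hsw : \sum_(tr : n.-tuple X) tp p tr * ind tr * expR (lam tr) =
           \sum_(tr : n.-tuple X) tp p tr * (y tr * ind tr).
  apply: eq_bigr => tr _; case: (tpcase tr) => [->|hp]; first by rewrite !mul0r.
  by rewrite ye // mulrCA -mulrA mulrCA [ind tr * _]mulrC mulrA.
have hC : \sum_(tr : n.-tuple X) tp p tr * (1 - ind tr) * lam tr <= 1.
  apply: le_trans hall; apply: ler_sum => tr _.
  case: (tpcase tr) => [->|hp]; first by rewrite !mul0r.
  rewrite -mulrA; apply: ler_wpM2l; first exact: tp_ge0.
  rewrite ye // /ind; case: (Ab _) => /=.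
    by rewrite subrr mul0r; exact/ltW/expR_gt0.
  rewrite subr0 mul1r; apply: le_trans (expR_ge1Dx _).
  by rewrite lerDr.
have hlow : - D - 1 <= \sum_(tr : n.-tuple X) tp p tr * ind tr * lam tr.
  have e : \sum_(tr : n.-tuple X) tp p tr * lam tr =
    \sum_(tr : n.-tuple X) tp p tr * ind tr * lam tr +
    \sum_(tr : n.-tuple X) tp p tr * (1 - ind tr) * lam tr.
    by rewrite -big_split; apply: eq_bigr => tr _; rewrite /=; ring.
  move: hEl; rewrite e => hEl.
  by rewrite -hEl; lra.
apply: le_trans hQA; rewrite -hsw; apply: le_trans hJ.
rewrite -/PA; apply: ler_wpM2l; first exact: ltW.
rewrite ler_expR; apply: ler_wpM2r; first by rewrite invr_ge0 ltW.
exact: hlow.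
Qed.

Lemma sum_count_act (s : seq X) :
  \sum_i (count (fun x : X => x.1 == i) s)%:R = (size s)%:R :> R.
Proof.
elim: s => [|y s IH]; first by rewrite big1.
rewrite /=; under eq_bigr do rewrite natrD.
rewrite big_split /= IH (bigD1 y.1) //= eqxx big1 ?addr0.
  by rewrite [in RHS]mulrS.
by move=> i hi; rewrite eq_sym (negbTE hi).
Qed.

Lemma sum_EN p n : valid_policy pol -> is_dist p ->
  \sum_i ENcount H pol p n i = n%:R.
Proof.
move=> vp dp; rewrite /ENcount exchange_big /=.
under eq_bigr do rewrite -mulr_sumr sum_count_act size_tuple.
by rewrite -mulr_suml sum_tp // mul1r.
Qed.
End Aux.





Section Mk.
Variable R : realType.
Variables (N M A : nat) (H : 'I_N -> 'I_M -> 'I_A) (pol : policy R N A) (i1 : 'I_N).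
Local Notation X := ('I_N * 'I_M)%type.
Local Notation tp := (traj_prob H pol).

Definition Ab (n : nat) (s : seq 'I_N) : bool := (n < 2 * count (pred1 i1) s)%N.

Lemma cnt_map n (tr : n.-tuple X) :
  count (pred1 i1) [seq x.1 | x <- tr] = count (fun x : X => x.1 == i1) tr.
Proof. by rewrite count_map. Qed.

Lemma mk1 p n : valid_policy pol -> is_dist p ->
  n%:R * (1 - \sum_(tr : n.-tuple X) tp p tr * (Ab n [seq x.1 | x <- tr])%:R) <=
  2 * (n%:R - ENcount H pol p n i1).
Proof.
move=> vp dp.
rewrite -[X in X - _](sum_tp R N M A H pol p n vp dp) -sumrB.
rewrite -[X in X - _]mul1r -[X in X * _ - _](sum_tp R N M A H pol p n vp dp) mulr_suml /ENcount -sumrB.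
rewrite !mulr_sumr; apply: ler_sum => tr _.
have t0 := tp_ge0 R N M A H pol p n tr vp dp.
have cle : (count (fun x : X => x.1 == i1) tr <= n)%N.
  by rewrite -{2}(size_tuple tr) count_size.
rewrite /Ab cnt_map; case: ltnP => h /=.
  rewrite mulr1 subrr mulr0 -mulrBr; apply: mulr_ge0 => //.
  by apply: mulr_ge0 => //; rewrite subr_ge0 ler_nat.
rewrite mulr0 subr0 -mulrBr.
have : (2 * (count (fun x : X => x.1 == i1) tr))%:R <= n%:R :> R by rewrite ler_nat.
rewrite natrM => h2; nra.
Qed.

Lemma mk2 q n : valid_policy pol -> is_dist q ->
  n%:R * (\sum_(tr : n.-tuple X) tp q tr * (Ab n [seq x.1 | x <- tr])%:R) <=
  2 * ENcount H pol q n i1.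
Proof.
move=> vp dq; rewrite /ENcount !mulr_sumr; apply: ler_sum => tr _.
have t0 := tp_ge0 R N M A H pol q n tr vp dq.
rewrite /Ab cnt_map; case: ltnP => h /=.
  have : n%:R < (2 * (count (fun x : X => x.1 == i1) tr))%:R :> R by rewrite ltr_nat.
  rewrite natrM => h2; nra.
by rewrite mulr0 mulr0; apply: mulr_ge0 => //; apply: mulr_ge0.
Qed.
End Mk.

Theorem lemma1 (R : realType) (N M A : nat) (L : 'M[R]_(N, M))
  (H : 'I_N -> 'I_M -> 'I_A) (pstar : 'I_M -> R) (i1 : 'I_N)
  (pol : policy R N A) :
  is_dist pstar ->
  globally_observable L H ->
  (forall j : 'I_N, j != i1 -> loss L i1 pstar < loss L j pstar) ->
  valid_policy pol ->
  strongly_consistent L H pol ->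
  forall q : 'I_M -> R, in_cell_compl L i1 q ->
  forall eps : R, 0 < eps ->
  exists T0 : nat, forall T : nat, (T0 <= T)%N ->
    (((1 - eps) * ln (T%:R : R))%:E <=
     \sum_(i < N) (ENcount H pol pstar T.-1 i)%:E
                  * KL (obs_dist H i pstar) (obs_dist H i q))%E.
Proof.
move=> dp _ hopt vp sc q [dq nC] eps eps0.
have [j1 [hj1 gq0]] : exists j1 : 'I_N, j1 != i1 /\ 0 < loss L i1 q - loss L j1 q.
  case: (pselect (exists j1 : 'I_N, j1 != i1 /\ 0 < loss L i1 q - loss L j1 q)) => // hne.
  exfalso; apply: nC; split => // j hj; rewrite leNgt; apply/negP => h.
  by apply: hne; exists j.
set gq := loss L i1 q - loss L j1 q in gq0.
have gapq : gq <= gap L q i1.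
  exact: (le_bigmax _ (fun k => loss L i1 q - loss L k q) j1).
have gap_ge0 : forall p i, 0 <= gap L p i by move=> p i; exact: bigmax_ge_id.
have gap_p : forall i, loss L i pstar - loss L i1 pstar <= gap L pstar i.
  by move=> i; exact: (le_bigmax _ (fun k => loss L i pstar - loss L k pstar) i1).
set e := Num.min eps (2^-1).
have e0 : 0 < e by rewrite lt_min eps0 invr_gt0 ltr0n.
have eeps : e <= eps by rewrite ge_min lexx.
have ehalf : e <= 2^-1 by rewrite ge_min lexx orbT.
have ehalf' : e <= 1/2 by rewrite mul1r.
set a := e / 4.
have a0 : 0 < a by rewrite divr_gt0.
have ae : a * 4 = e by rewrite /a divfK.
set C := \sum_(i | i != i1) (loss L i pstar - loss L i1 pstar)^-1.
have C0 : 0 <= C.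
  apply: sumr_ge0 => i hi; rewrite invr_ge0 ltW // subr_gt0; exact: hopt.
have hC : forall i, i != i1 -> 1 <= C * (loss L i pstar - loss L i1 pstar).
  move=> i hi; have d0 : 0 < loss L i pstar - loss L i1 pstar by rewrite subr_gt0 hopt.
  have h : (loss L i pstar - loss L i1 pstar)^-1 <= C.
    rewrite /C (bigD1 i) //= lerDl; apply: sumr_ge0 => k /andP [hk _].
    by rewrite invr_ge0 ltW // subr_gt0 hopt.
  rewrite -(mulVf (lt0r_neq0 d0)); apply: ler_wpM2r => //; exact: ltW.
set ep := a / (2 * (C + 1)).
have C1 : 0 < 2 * (C + 1) by lra.
have ep0 : 0 < ep by rewrite divr_gt0.
have hCep : 2 * C * ep <= a.
  by rewrite /ep mulrA ler_pdivrMr //; nra.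
have [T1 hT1] := sc pstar dp a a0 ep ep0.
have [T2 hT2] := sc q dq a a0 1 ltr01.
set kappa := ln (2 / gq).
set L0 := 2 * (3 + `|kappa|) / e.
exists (maxn (maxn T1 T2) (Num.truncn (expR L0)).+1).+1.
move=> T hT.
have [n eT] : exists n, T = n.+1.
  by exists T.-1; rewrite prednK // (leq_trans _ hT).
move: hT; rewrite eT ltnS !geq_max => /andP [/andP [hn1 hn2] hn3] /=.
have n1 : (1 <= n)%N by apply: leq_trans hn3.
have nR : 1 <= n%:R :> R by rewrite ler1n.
set u := ln (n%:R : R).
have hu : L0 <= u.
  have h1 : expR L0 < n%:R.
    apply: lt_le_trans (Num.Theory.truncnS_gt _) _; rewrite ler_nat; exact: hn3.
  by rewrite /u -[X in X <= _]expRK ler_ln ?posrE ?expR_gt0 //; [exact: ltW | lra].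
case: (pselect (forall i, 0 < ENcount H pol pstar n i -> KLfin R N M A H pstar q i)) => hf;
  last first.
  have [i [hi1 hi2]] : exists i, 0 < ENcount H pol pstar n i /\ ~~ KLfin R N M A H pstar q i.
    case: (pselect (exists i, 0 < ENcount H pol pstar n i /\ ~~ KLfin R N M A H pstar q i))
      => // hne.
    exfalso; apply: hf => i h.
    case: (boolP (KLfin R N M A H pstar q i)) => // hk.
    by exfalso; apply: hne; exists i; split.
  suff -> : (\sum_(i < N) (ENcount H pol pstar n i)%:E
                  * KL (obs_dist H i pstar) (obs_dist H i q))%E = +oo%E by exact: leey.
  apply/eqP; rewrite esum_eqy.
    apply/existsP; exists i; rewrite /= /KL.
    move: hi2; rewrite /KLfin negbK => ->.
    by rewrite gt0_muley // lte_fin.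
  move=> k _; rewrite /KL; case: ifP => _.
    have := EN_ge0 R N M A H pol pstar n k vp dp; rewrite le_eqVlt => /orP [/eqP <-|hk].
      by rewrite mul0e.
    by rewrite gt0_muley // lte_fin.
  by [].
have hsum : (\sum_(i < N) (ENcount H pol pstar n i)%:E
                  * KL (obs_dist H i pstar) (obs_dist H i q))%E =
   (\sum_(i < N) ENcount H pol pstar n i * cKL R N M A H pstar q i)%:E.
  rewrite -sumEFin; apply: eq_bigr => i _.
  have := EN_ge0 R N M A H pol pstar n i vp dp; rewrite le_eqVlt => /orP [/eqP <-|hi].
    by rewrite mul0e mul0r.
  have := hf i hi; rewrite /KLfin /KL => /negbTE ->.
  by [].
rewrite hsum lee_fin.
set D := \sum_(i < N) ENcount H pol pstar n i * cKL R N M A H pstar q i.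
set PA := \sum_(tr : n.-tuple ('I_N * 'I_M)) traj_prob H pol pstar tr *
   (Ab N i1 n [seq x.1 | x <- tr])%:R.
set QA := \sum_(tr : n.-tuple ('I_N * 'I_M)) traj_prob H pol q tr *
   (Ab N i1 n [seq x.1 | x <- tr])%:R.
have hm1 := mk1 R N M A H pol i1 pstar n vp dp; rewrite -/PA in hm1.
have hm2 := mk2 R N M A H pol i1 q n vp dq; rewrite -/QA in hm2.
have hEN := sum_EN R N M A H pol pstar n vp dp.
have hrest : n%:R - ENcount H pol pstar n i1 =
    \sum_(i | i != i1) ENcount H pol pstar n i.
  by rewrite -hEN (bigD1 i1) //= addrC addrK.
have hregp : \sum_(i | i != i1) ENcount H pol pstar n i <= C * Eregret L H pol pstar n.
  rewrite /Eregret [X in _ <= _ * X](bigD1 i1) //= mulrDr.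
  apply: (@le_trans _ _ (C * \sum_(i | i != i1) ENcount H pol pstar n i * gap L pstar i)).
    rewrite mulr_sumr; apply: ler_sum => i hi.
    have h1 := hC i hi; have h2 := gap_p i.
    have E0 := EN_ge0 R N M A H pol pstar n i vp dp.
    have EC := mulr_ge0 E0 C0.
    nra.
  rewrite lerDr; apply: mulr_ge0 => //; apply: mulr_ge0 => //.
  exact: EN_ge0.
have hrp : Eregret L H pol pstar n <= ep * n%:R.
  apply: le_trans (hT1 n hn1) _; apply: ler_wpM2l; first exact: ltW.
  rewrite -[X in _ <= X](powRr1 (ler0n _ n)); apply: ler_powR => //.
  lra.
have hPA : 1 - a <= PA.
  have h : n%:R * (1 - PA) <= a * n%:R.
    apply: le_trans hm1 _; rewrite hrest.
    have : 2 * \sum_(i | i != i1) ENcount H pol pstar n i <= 2 * C * (ep * n%:R).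
      by rewrite -mulrA; apply: ler_wpM2l => //; apply: le_trans hregp _; apply: ler_wpM2l.
    move=> h'; apply: le_trans h' _; rewrite mulrA; apply: ler_wpM2r => //.
  nra.
have PA0 : 0 < PA by lra.
have hcore := core R N M A H pol pstar q n (Ab N i1 n) vp dp dq hf PA0.
rewrite -/PA -/QA -/D in hcore.
have hQ : n%:R * QA * gq <= 2 * n%:R `^ a.
  have hrq : ENcount H pol q n i1 * gq <= n%:R `^ a.
    apply: (@le_trans _ _ (Eregret L H pol q n)).
      rewrite /Eregret (bigD1 i1) //= -[X in X <= _]addr0; apply: lerD.
        by apply: ler_wpM2l => //; exact: EN_ge0.
      apply: sumr_ge0 => i _; apply: mulr_ge0 => //; exact: EN_ge0.
    by rewrite -[X in _ <= X]mul1r; apply: hT2.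
  nra.
set z := (- D - 1) / PA in hcore.
have zPA : z * PA = - D - 1 by rewrite /z divfK // gt_eqF.
have npos : 0 < n%:R :> R by lra.
have ngq := mulr_gt0 npos gq0.
have h1 : PA * expR z * n%:R * gq <= 2 * n%:R `^ a.
  apply: le_trans hQ.
  have h := ler_wpM2r (ltW ngq) hcore.
  have -> : PA * expR z * n%:R * gq = PA * expR z * (n%:R * gq) by ring.
  have -> : n%:R * QA * gq = QA * (n%:R * gq) by ring.
  exact: h.
have e1 : PA * expR z * n%:R * gq = expR (ln PA + z + u + ln gq).
  by rewrite !expRD !lnK ?posrE.
have e2 : 2 * n%:R `^ a = expR (ln 2 + a * u).
  rewrite expRD lnK ?posrE // /powR gt_eqF //.
have key : ln PA + z + u + ln gq <= ln 2 + a * u by rewrite -ler_expR -e1 -e2.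
have l2 : ln 2 <= 1 :> R.
  have := @le_ln1Dx R 1; rewrite (_ : 1 + 1 = 2 :> R); last by [].
  by apply; lra.
have l20 : 0 <= ln 2 :> R by apply: ln_ge0; lra.
have lnPA : -1 <= ln PA.
  have : ln (2^-1) <= ln PA by rewrite ler_ln ?posrE //; lra.
  by rewrite lnV ?posrE //; lra.
have kap : kappa = ln 2 - ln gq by rewrite /kappa ln_div ?posrE.
have hln1 : ln (n.+1%:R) <= ln 2 + u :> R.
  rewrite /u -lnM ?posrE // ler_ln ?posrE //; last by apply: mulr_gt0; lra.
  rewrite -natrM ler_nat mul2n -addnn -addn1 leq_add2l; exact: n1.
have hln0 : 0 <= ln (n.+1%:R) :> R by apply: ln_ge0; rewrite ler1n.
set k := `|kappa|.
have kk : kappa <= k := ler_norm kappa.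
have k0 : 0 <= k := normr_ge0 kappa.
have heu : 2 * (3 + k) <= e * u.
  by move: hu; rewrite /L0 ler_pdivrMr // [u * e]mulrC.
have u0 : 0 <= u by apply: ln_ge0.
have hz : z <= k + 1 - (1 - a) * u by lra.
have hW : 1 + k <= (1 - a) * u by nra.
have hD1 : - D - 1 <= PA * (k + 1 - (1 - a) * u).
  by rewrite -zPA mulrC; apply: ler_wpM2l => //; exact: ltW.
have hD2 : (1 - a) * ((1 - a) * u - 1 - k) - 1 <= D by nra.
have p1 : 0 <= (1 - e) * (1 + u - ln (n.+1%:R)) by apply: mulr_ge0; lra.
have p2 : 0 <= a * a * u by rewrite mulr_ge0 // mulr_ge0 // ltW.
have p3 : 0 <= a * (1 + k) by rewrite mulr_ge0 //; [exact: ltW | lra].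
have hau : 4 * (a * u) = e * u by rewrite -ae; ring.
have hfin : (1 - e) * ln (n.+1%:R) <= (1 - a) * ((1 - a) * u - 1 - k) - 1 by lra.
have : (1 - eps) * ln (n.+1%:R) <= (1 - e) * ln (n.+1%:R).
  by apply: ler_wpM2r => //; lra.
nra.
Qed.
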